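(* Assume that $R,\dot R,\ddot R,\dddot R$ satisfy the bicolored tetrahedron equations (BTE) for every $\sigma\in\mathbb{Z}/2\mathbb{Z}$ and all spectral parameters, and that $\dddot R^{[\sigma]}(r_1,r_2,r_3)$ is invertible for every $\sigma$ and all $r_1,r_2,r_3\in C$. Fix $L\ge 1$ and planes $1_1<\dots<1_{2L}$ with arbitrary parameters $r_{1_l}\in C$, and let $2<3<4$ be three further planes, all larger than every $1_l$, with arbitrary parameters $r_2,r_3,r_4\in C$. Then for every $\sigma\in\mathbb{Z}/2\mathbb{Z}$ the trace reductions satisfy the bicolored Yang--Baxter equation $$\mathbf{R}^{[\sigma]}_{23}\,\dot{\mathbf{R}}^{[\sigma+1]}_{24}\,\ddot{\mathbf{R}}^{[\sigma]}_{34}=\ddot{\mathbf{R}}^{[\sigma+1]}_{34}\,\dot{\mathbf{R}}^{[\sigma]}_{24}\,\mathbf{R}^{[\sigma+1]}_{23}$$ as operators on $\bigotimes_{l}\bigl(V_{(1_l2)}\otimes V_{(1_l3)}\otimes V_{(1_l4)}\bigr)$.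
   Context: Let $V$ be a finite-dimensional complex vector space and $C$ a set (of spectral parameters). Let $R,\dot R,\ddot R,\dddot R:\mathbb{Z}/2\mathbb{Z}\times C^3\to\mathrm{End}(V\otimes V\otimes V)$ be maps; write $X^{[\sigma]}(r_1,r_2,r_3)$ for the value of $X\in\{R,\dot R,\ddot R,\dddot R\}$ at $(\sigma,r_1,r_2,r_3)$. Superscript colors $[\sigma]$ are always read modulo 2. Notation: consider a finite totally ordered set of ''planes'', each plane $\alpha$ carrying a parameter $r_\alpha\in C$. For each pair $\alpha<\beta$ let $V_{(\alpha\beta)}$ be a copy of $V$. For $\alpha<\beta<\gamma$, $X^{[\sigma]}_{(\alpha\beta\gamma)}$ denotes the operator on the tensor product of all the spaces $V_{(\cdot\cdot)}$ under consideration that acts as $X^{[\sigma]}(r_\alpha,r_\beta,r_\gamma)$ on $V_{(\alpha\beta)}\otimes V_{(\alpha\gamma)}\otimes V_{(\beta\gamma)}$ (in this order) and as the identity on all other factors. Bicolored tetrahedron equations (BTE$[\sigma]$): for any four planes $1<2<3<4$ with arbitrary parameters $r_1,r_2,r_3,r_4\in C$, on $V_{(12)}\otimes V_{(13)}\otimes V_{(14)}\otimes V_{(23)}\otimes V_{(24)}\otimes V_{(34)}$, $$R^{[\sigma]}_{(123)}\dot R^{[\sigma+1]}_{(124)}\ddot R^{[\sigma]}_{(134)}\dddot R^{[\sigma+1]}_{(234)}=\dddot R^{[\sigma]}_{(234)}\ddot R^{[\sigma+1]}_{(134)}\dot R^{[\sigma]}_{(124)}R^{[\sigma+1]}_{(123)}.$$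 Trace reduction: given planes $1_1<\dots<1_{2L}$ and planes $\alpha<\beta$ larger than all $1_l$, define $$\mathbf{R}^{[\sigma]}_{\alpha\beta}:=\mathrm{Tr}_{V_{(\alpha\beta)}}\Bigl(R^{[\sigma+1]}_{(1_1\alpha\beta)}R^{[\sigma+2]}_{(1_2\alpha\beta)}\cdots R^{[\sigma+2L]}_{(1_{2L}\alpha\beta)}\Bigr),$$ the partial trace over the factor $V_{(\alpha\beta)}$, an operator on $\bigotimes_l\bigl(V_{(1_l\alpha)}\otimes V_{(1_l\beta)}\bigr)$ (extended by the identity to other factors). $\dot{\mathbf R}$, $\ddot{\mathbf R}$ are defined in the same way with $R$ replaced by $\dot R$, $\ddot R$. *)

(* Defs.v *)
(* Operators on tensor products of copies of V = K^d are
   represented by their matrix elements in the standard basis: a tensor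
   product of copies of V indexed by a finite set W of "wires" has basis
   {ffun W -> 'I_d}, and an operator is a function (out, in) -> K. *)
From HB Require Import structures.
From mathcomp Require Import all_boot all_order all_algebra.
From mathcomp Require Import reals.
From mathcomp Require Import complex.
Set Implicit Arguments. Unset Strict Implicit. Unset Printing Implicit Defensive.
Import Order.TTheory GRing.Theory Num.Theory.
Local Open Scope ring_scope.

Section Ops.
Variables (K : pzRingType) (d : nat).

Definition st (W : finType) := {ffun W -> 'I_d}.
Definition op (W : finType) := st W -> st W -> K.

Definition opmul (W : finType) (A B : op W) : op W :=
  fun x y => \sum_(z : st W) A x z * B z y.
Definition opid (W : finType) : op W := fun x y => (x == y)%:R.

Definition sel (W : finType) (a b c : W) (x : st W) : st 'I_3 :=
  [ffun i : 'I_3 => x (if val i == 0%N then a else if val i == 1%N then b else c)].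

Definition emb (W : finType) (X : op 'I_3) (a b c : W) : op W :=
  fun x y => X (sel a b c x) (sel a b c y) *
     ([forall w, ((w != a) && (w != b) && (w != c)) ==> (x w == y w)] : bool)%:R.

Definition invertible_op (W : finType) (X : op W) : Prop :=
  exists Y : op W, opmul X Y = @opid W /\ opmul Y X = @opid W.

Definition w12 : 'I_6 := @Ordinal 6 0 isT.
Definition w13 : 'I_6 := @Ordinal 6 1 isT.
Definition w14 : 'I_6 := @Ordinal 6 2 isT.
Definition w23 : 'I_6 := @Ordinal 6 3 isT.
Definition w24 : 'I_6 := @Ordinal 6 4 isT.
Definition w34 : 'I_6 := @Ordinal 6 5 isT.

Variable C : Type.
Definition opfamily := 'Z_2 -> C -> C -> C -> op 'I_3.

Definition BTE (R0 R1 R2 R3 : opfamily) (s : 'Z_2) : Prop :=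
  forall r1 r2 r3 r4 : C,
  opmul (emb (R0 s r1 r2 r3) w12 w13 w23)
   (opmul (emb (R1 (s + 1) r1 r2 r4) w12 w14 w24)
    (opmul (emb (R2 s r1 r3 r4) w13 w14 w34)
           (emb (R3 (s + 1) r2 r3 r4) w23 w24 w34)))
  =
  opmul (emb (R3 s r2 r3 r4) w23 w24 w34)
   (opmul (emb (R2 (s + 1) r1 r3 r4) w13 w14 w34)
    (opmul (emb (R1 s r1 r2 r4) w12 w14 w24)
           (emb (R0 (s + 1) r1 r2 r3) w12 w13 w23))).

(* ---- Trace reduction ----
   Planes 1_1 < ... < 1_n (indexed by l : 'I_n, parameters s l) and planes
   2<3<4 (indexed by j : 'I_3).  The target space is
   (x)_l (V_(1_l 2) (x) V_(1_l 3) (x) V_(1_l 4)), wire (l, j) = V_(1_l, j).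
   The auxiliary space V_(alpha beta) is the extra wire None of option W. *)
Definition W3 (n : nat) := ('I_n * 'I_3)%type.

Definition oprod (W : finType) (n : nat) (F : 'I_n -> op W) : op W :=
  foldr (fun l acc => opmul (F l) acc) (@opid W) (enum 'I_n).

Definition ext (n : nat) (x : st (W3 n)) (t : 'I_d) : st (option (W3 n)) :=
  [ffun w => if w is Some w' then x w' else t].

(* bold X^[sg]_{alpha beta} = Tr_{V_(alpha beta)} (X^[sg+1]_(1_1 alpha beta) ... X^[sg+n]_(1_n alpha beta)) *)
Definition trred (X : opfamily) (n : nat) (s : 'I_n -> C) (ra rb : C)
    (a b : 'I_3) (sg : 'Z_2) : op (W3 n) :=
  fun x y => \sum_(t : 'I_d)
    oprod (fun l : 'I_n =>
             emb (X (sg + (l.+1)%:R) (s l) ra rb)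
                 (Some (l, a)) (Some (l, b)) None) (ext x t) (ext y t).

End Ops.

Definition j2 : 'I_3 := @Ordinal 3 0 isT.
Definition j3 : 'I_3 := @Ordinal 3 1 isT.
Definition j4 : 'I_3 := @Ordinal 3 2 isT.

(* Main.v *)
Require Import Defs.
From HB Require Import structures.
From mathcomp Require Import all_boot all_order all_algebra.
From mathcomp Require Import reals.
From mathcomp Require Import complex.
From mathcomp Require Import ring.
From Stdlib Require Import FunctionalExtensionality.
Set Implicit Arguments. Unset Strict Implicit. Unset Printing Implicit Defensive.
Import Order.TTheory GRing.Theory Num.Theory.
Local Open Scope ring_scope.
Section Mat.
Variable K : comPzRingType.
Variable I : finType.
Definition mat := I -> I -> K.
Definition mmul (A B : mat) : mat := fun x y => \sum_z A x z * B z y.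
Definition mid : mat := fun x y => (x == y)%:R.
Definition mtr (A : mat) : K := \sum_x A x x.
Definition mprod (T : Type) (s : seq T) (F : T -> mat) : mat :=
  foldr (fun l acc => mmul (F l) acc) mid s.

Lemma mmulA (A B C : mat) : mmul A (mmul B C) = mmul (mmul A B) C.
Proof.
apply: functional_extensionality => x; apply: functional_extensionality => y.
rewrite /mmul; under eq_bigr do rewrite big_distrr /=.
rewrite exchange_big /=; apply: eq_bigr => w _; rewrite big_distrl /=.
by apply: eq_bigr => z _; rewrite mulrA.
Qed.

Lemma mmul1l (A : mat) : mmul mid A = A.
Proof.
apply: functional_extensionality => x; apply: functional_extensionality => y.
rewrite /mmul /mid (bigD1 x) //= eqxx mul1r big1 ?addr0 // => z zx.
by rewrite eq_sym (negbTE zx) mul0r.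
Qed.

Lemma mmul1r (A : mat) : mmul A mid = A.
Proof.
apply: functional_extensionality => x; apply: functional_extensionality => y.
rewrite /mmul /mid (bigD1 y) //= eqxx mulr1 big1 ?addr0 // => z zx.
by rewrite (negbTE zx) mulr0.
Qed.

Lemma mtrC (A B : mat) : mtr (mmul A B) = mtr (mmul B A).
Proof.
rewrite /mtr /mmul exchange_big /=; apply: eq_bigr => x _.
by apply: eq_bigr => y _; rewrite mulrC.
Qed.

Lemma mtele (F G T : nat -> mat) (k m : nat) :
  (forall i, (m <= i < m + k)%N -> mmul (F i) (T i.+1) = mmul (T i) (G i)) ->
  mmul (mprod (iota m k) F) (T (m + k)%N) = mmul (T m) (mprod (iota m k) G).
Proof.
elim: k m => [|k IH] m H /=; first by rewrite addn0 mmul1l mmul1r.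
rewrite -mmulA -addSnnS IH; last first.
  by move=> i /andP [Hi Hi']; apply: H; rewrite (ltnW Hi) /= -addSnnS.
by rewrite mmulA H -?mmulA // leqnn /= -addSnnS leq_addr.
Qed.

Lemma mprod_distr (n : nat) (J : finType) (F : 'I_n -> J -> mat) (g0 : {ffun 'I_n -> J}) :
  (fun u v => \sum_(Z : {ffun 'I_n -> J}) mprod (enum 'I_n) (fun l => F l (Z l)) u v)
  = mprod (enum 'I_n) (fun l u v => \sum_j F l j u v).
Proof.
suff H : forall (s : seq 'I_n) (g : {ffun 'I_n -> J}) u v, uniq s ->
  \sum_(Z : {ffun 'I_n -> J}) ([forall l, (l \notin s) ==> (Z l == g l)])%:R *
     mprod s (fun l => F l (Z l)) u v
  = mprod s (fun l u v => \sum_j F l j u v) u v.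
  apply: functional_extensionality => u; apply: functional_extensionality => v.
    rewrite -(H _ g0) ?enum_uniq //; apply: eq_bigr => Z _.
    suff -> : [forall l, (l \notin enum 'I_n) ==> (Z l == g0 l)] by rewrite mul1r.
    by apply/forallP => l; rewrite mem_enum.
elim=> [|l s IH] g u v /=.
  move=> _; rewrite (bigD1 g) //= big1 ?addr0.
    suff -> : [forall l, true ==> (g l == g l)] by rewrite mul1r.
    by apply/forallP => l; rewrite eqxx.
  move=> Z ZG; case: forallP => [H|]; last by rewrite mul0r.
  by case/eqP: ZG; apply/ffunP => l; move: (H l) => /eqP.
case/andP=> ls us.
set g' := fun j : J => [ffun l0 => if l0 == l then j else g l0].
have E : forall Z : {ffun 'I_n -> J},
   ([forall l0, (l0 \notin l :: s) ==> (Z l0 == g l0)])%:R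
   = \sum_j ([forall l0, (l0 \notin s) ==> (Z l0 == g' j l0)])%:R :> K.
  move=> Z; rewrite (bigD1 (Z l)) //= big1 ?addr0.
    congr ((nat_of_bool _)%:R); apply/forallP/forallP => H l0; have := H l0;
      rewrite /g' ffunE in_cons; case: (l0 =P l) => [->|/eqP nl];
      rewrite ?eqxx ?(negbTE nl) ?implybT //=.
  move=> j jZ; case: forallP => // H; move: (H l).
  by rewrite /g' ffunE eqxx ls /= eq_sym (negbTE jZ).
have E2 : forall j (Z : {ffun 'I_n -> J}) w,
   ([forall l0, (l0 \notin s) ==> (Z l0 == g' j l0)])%:R * F l (Z l) u w
   = ([forall l0, (l0 \notin s) ==> (Z l0 == g' j l0)])%:R * F l j u w :> K.
  move=> j Z w; case: forallP => H; last by rewrite !mul0r.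
  by move: (H l); rewrite ls /g' ffunE eqxx => /eqP ->.
rewrite /mmul.
transitivity (\sum_j \sum_w F l j u w *
   \sum_(Z : {ffun 'I_n -> J}) ([forall l0, (l0 \notin s) ==> (Z l0 == g' j l0)])%:R *
                 mprod s (fun l => F l (Z l)) w v).
  under eq_bigr do rewrite E big_distrl /=.
  rewrite exchange_big /=; apply: eq_bigr => j _.
  under eq_bigr do rewrite big_distrr /=.
  rewrite exchange_big /=; apply: eq_bigr => w _.
  rewrite big_distrr /=; apply: eq_bigr => Z _.
  by rewrite mulrA E2 mulrA [_ * F l j u w]mulrC.
under eq_bigr do under eq_bigr do rewrite IH //.
rewrite exchange_big /=; apply: eq_bigr => w _.
by rewrite big_distrl.
Qed.
End Mat.
Section Kron.
Variable K : comPzRingType.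
Variable d : nat.
Local Notation matd := (mat K 'I_d).
Local Notation mat3 := (mat K (st d 'I_3)).

Definition K3 (M : 'I_3 -> matd) : mat3 := fun u v => \prod_i M i (u i) (v i).

Lemma K3mul (M M' : 'I_3 -> matd) :
  mmul (K3 M) (K3 M') = K3 (fun i => mmul (M i) (M' i)).
Proof.
apply: functional_extensionality => u; apply: functional_extensionality => v.
rewrite /K3 /mmul bigA_distr_bigA /=; apply: eq_bigr => w _.
by rewrite -big_split.
Qed.

Lemma K3id : K3 (fun _ => @mid K 'I_d) = @mid K (st d 'I_3).
Proof.
apply: functional_extensionality => u; apply: functional_extensionality => v.
rewrite /K3 /mid; have [->|uv] := eqVneq u v.
  by rewrite big1 // => i _; rewrite eqxx.
have [i ui] : exists i, u i != v i.
  apply/existsP; apply: contraR uv; rewrite negb_exists => /forallP H.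
  by apply/eqP/ffunP => i; apply/eqP; move: (H i); rewrite negbK.
by rewrite (bigD1 i) //= (negbTE ui) mul0r.
Qed.

Lemma mtrK3 (M : 'I_3 -> matd) : mtr (K3 M) = \prod_i mtr (M i).
Proof. by rewrite /mtr /K3 bigA_distr_bigA. Qed.

Lemma mprodK3 (T : Type) (s : seq T) (M : T -> 'I_3 -> matd) :
  mprod s (fun l => K3 (M l)) = K3 (fun i => mprod s (fun l => M l i)).
Proof.
elim: s => [|l s IH] /=; first by rewrite K3id.
by rewrite IH K3mul.
Qed.
End Kron.

Section Scal.
Variable K : comPzRingType.
Variable I : finType.
Local Notation mat := (mat K I).
Definition mscale (c : K) (A : mat) : mat := fun u v => c * A u v.

Lemma mmulZl c (A B : mat) : mmul (mscale c A) B = mscale c (mmul A B).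
Proof.
apply: functional_extensionality => u; apply: functional_extensionality => v.
by rewrite /mmul /mscale big_distrr /=; apply: eq_bigr => w _; rewrite mulrA.
Qed.

Lemma mmulZr c (A B : mat) : mmul A (mscale c B) = mscale c (mmul A B).
Proof.
apply: functional_extensionality => u; apply: functional_extensionality => v.
by rewrite /mmul /mscale big_distrr /=; apply: eq_bigr => w _; rewrite mulrCA.
Qed.

Lemma mscaleA c c' (A : mat) : mscale c (mscale c' A) = mscale (c * c') A.
Proof.
apply: functional_extensionality => u; apply: functional_extensionality => v.
by rewrite /mscale mulrA.
Qed.

Lemma mprodZ (T : Type) (s : seq T) (c : T -> K) (A : T -> mat) :
  mprod s (fun l => mscale (c l) (A l)) = mscale (\prod_(l <- s) c l) (mprod s A).
Proof.
elim: s => [|l s IH] /=.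
  rewrite big_nil; apply: functional_extensionality => u.
  by apply: functional_extensionality => v; rewrite /mscale mul1r.
by rewrite IH mmulZl mmulZr mscaleA big_cons.
Qed.

Lemma mtrZ c (A : mat) : mtr (mscale c A) = c * mtr A.
Proof. by rewrite /mtr /mscale big_distrr. Qed.

Lemma mtr_sum (J : finType) (F : J -> mat) :
  mtr (fun u v => \sum_j F j u v) = \sum_j mtr (F j).
Proof. by rewrite /mtr exchange_big. Qed.
End Scal.
Lemma eq_mprod (K : comPzRingType) (I : finType) (T : eqType) (s : seq T) (F G : T -> mat K I) :
  {in s, F =1 G} -> mprod s F = mprod s G.
Proof.
elim: s => [|l s IH] //= H; rewrite H ?mem_head // IH // => l' l's.
by apply: H; rewrite in_cons l's orbT.
Qed.

Section Tr.
Variable K : comPzRingType.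
Variables d n : nat.
Local Notation W := (W3 n).

Definition tri (a b c : 'I_d) : st d 'I_3 :=
  [ffun i : 'I_3 => if val i == 0%N then a else if val i == 1%N then b else c].
Definition slice (x : st d W) (l : 'I_n) : st d 'I_3 := [ffun j => x (l, j)].
Definition Amat (X : op K d 'I_3) (p q : st d 'I_3) (a b : 'I_3) : mat K 'I_d :=
  fun t t' => X (tri (p a) (p b) t) (tri (q a) (q b) t').
Definition Eop (F : 'I_n -> op K d 'I_3) (a b : 'I_3) (l : 'I_n) : op K d (option W) :=
  emb (F l) (Some (l, a)) (Some (l, b)) None.
Definition tr2 (F : 'I_n -> op K d 'I_3) (a b : 'I_3) : op K d W :=
  fun x y => \sum_t oprod (Eop F a b) (ext x t) (ext y t).

Lemma sum_opt (f : st d (option W) -> K) :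
  \sum_z f z = \sum_(x : st d W) \sum_u f (ext x u).
Proof.
rewrite pair_big /=.
rewrite (reindex (fun p : st d W * 'I_d => ext p.1 p.2)) //=.
exists (fun z : st d (option W) => ([ffun w => z (Some w)], z None)).
  by move=> [x u] _ /=; congr pair; [apply/ffunP => w|]; rewrite /ext !ffunE.
by move=> z _; apply/ffunP => [[w|]]; rewrite /ext !ffunE.
Qed.

Lemma forall_opt (P : option W -> bool) : [forall w, P w] = P None && [forall w, P (Some w)].
Proof.
apply/forallP/andP => [H|[H1 /forallP H2] [w|]] //; split => //.
by apply/forallP.
Qed.

Lemma sel_ext (x : st d W) t l a b :
  sel (Some (l, a)) (Some (l, b)) None (ext x t) = tri (slice x l a) (slice x l b) t.
Proof.
by apply/ffunP => i; rewrite /sel /tri /ext /slice !ffunE; case: ifP => //; case: ifP.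
Qed.

Definition offab (s : seq 'I_n) (a b : 'I_3) (x y : st d W) : bool :=
  [forall w : W, ((w.1 \notin s) || ((w.2 != a) && (w.2 != b))) ==> (x w == y w)].

Definition eq_off (l : 'I_n) (a b : 'I_3) (x z : st d W) : bool :=
  [forall w : W, ((w != (l, a)) && (w != (l, b))) ==> (x w == z w)].

Lemma emb_ext (X : op K d 'I_3) l a b x t z u :
  emb X (Some (l, a)) (Some (l, b)) None (ext x t) (ext z u)
  = X (tri (slice x l a) (slice x l b) t) (tri (slice z l a) (slice z l b) u)
    * (eq_off l a b x z)%:R.
Proof.
rewrite /emb !sel_ext forall_opt /=; congr (_ * (nat_of_bool _)%:R).
by apply: eq_forallb => w; rewrite /ext !ffunE andbT.
Qed.

Lemma S1gen (F : 'I_n -> op K d 'I_3) (a b : 'I_3) (s : seq 'I_n) x y t t' :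
  uniq s ->
  foldr (fun l acc => opmul (Eop F a b l) acc) (@opid K d _) s (ext x t) (ext y t')
  = (offab s a b x y)%:R *
    mprod s (fun l => Amat (F l) (slice x l) (slice y l) a b) t t'.
Proof.
elim: s x t => [|l s IH] x t /=.
  move=> _; rewrite /opid /mid /offab -natrM mulnb.
  congr ((nat_of_bool _)%:R); apply/eqP/andP => [E|[/forallP H /eqP ->]].
    split; last by have := congr1 (fun f : st d (option W) => f None) E; rewrite /ext !ffunE => ->.
    apply/forallP => w; rewrite in_nil /=.
    by have := congr1 (fun f : st d (option W) => f (Some w)) E; rewrite /ext !ffunE => ->.
  by apply/ffunP => [[w|]]; rewrite /ext !ffunE //; apply/eqP; move: (H w); rewrite in_nil.
case/andP=> ls us.
rewrite /opmul sum_opt.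
set z0 : st d W := [ffun w => if (w == (l, a)) || (w == (l, b)) then y w else x w].
rewrite (bigD1 z0) //= [X in _ + X]big1 ?addr0; last first.
  move=> z zz0; apply: big1 => u _.
  rewrite /Eop emb_ext IH //.
  case E1: (eq_off l a b x z); last by rewrite mulr0 mul0r.
  case E2: (offab s a b z y); last by rewrite mul0r mulr0.
  case/eqP: zz0; apply/ffunP => w; rewrite /z0 ffunE.
  move/forallP: E1 => /(_ w); move/forallP: E2 => /(_ w).
  case: ifP => [/orP H|/negbT]; last first.
    by rewrite negb_or => -> _ /= /eqP.
  have -> : w.1 \notin s = true.
    by case: H => /eqP -> /=.
  by move=> /= /eqP.
have H1 : eq_off l a b x z0.
  apply/forallP => w; apply/implyP => /andP [wa wb].
  by rewrite /z0 ffunE (negbTE wa) (negbTE wb).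
have H2 : offab s a b z0 y = offab (l :: s) a b x y.
  apply: eq_forallb => w; rewrite /z0 ffunE.
  case: ifP => [/orP H|/negbT].
    by case: H => /eqP ->; rewrite /= !eqxx implybT in_cons eqxx /= ?andbF.
  rewrite negb_or; case: w => [l' j] /= /andP [H H'].
  rewrite in_cons negb_or; case: (l' =P l) => [El|/eqP nl] //=.
  subst l'; move: H H'; rewrite !xpair_eqE eqxx /= => -> ->; by rewrite /= orbT.
have H3a : slice z0 l a = slice y l a by rewrite /slice /z0 !ffunE eqxx.
have H3b : slice z0 l b = slice y l b by rewrite /slice /z0 !ffunE eqxx orbT.
have H4 : mprod s (fun l' => Amat (F l') (slice z0 l') (slice y l') a b)
        = mprod s (fun l' => Amat (F l') (slice x l') (slice y l') a b).
  apply: eq_mprod => l' l's.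
  have nl : l' != l by apply: contraNneq ls => <-.
  have -> : slice z0 l' = slice x l'.
    by apply/ffunP => jj; rewrite /slice /z0 !ffunE !xpair_eqE (negbTE nl).
  by [].
have E : forall (A B : mat K 'I_d) (c : K),
    c * mmul A B t t' = \sum_u c * (A t u * B u t').
  by move=> A B c; rewrite /mmul big_distrr.
rewrite E; apply: eq_bigr => u _.
rewrite /Eop emb_ext IH // H1 H2 H4 /Amat H3a H3b mulr1 mulrCA //.
Qed.
End Tr.

Lemma S1 (K : comPzRingType) (d n : nat) (F : 'I_n -> op K d 'I_3) (a b : 'I_3) x y :
  tr2 F a b x y = (offab (enum 'I_n) a b x y)%:R *
    mtr (mprod (enum 'I_n) (fun l => Amat (F l) (slice x l) (slice y l) a b)).
Proof.
rewrite /tr2 /oprod /mtr big_distrr /=; apply: eq_bigr => t _.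
by rewrite -S1gen ?enum_uniq.
Qed.
Section Six.
Variable K : comPzRingType.
Variable d : nat.
Local Notation st3 := (st d 'I_3).

Definition cat6 (p u : st3) : st d 'I_6 :=
  [ffun i : 'I_6 => match val i with 0 => p j2 | 1 => p j3 | 2 => p j4
                   | 3 => u j2 | 4 => u j3 | _ => u j4 end].
Definition sp1 (z : st d 'I_6) : st3 := tri (z w12) (z w13) (z w14).
Definition sp2 (z : st d 'I_6) : st3 := tri (z w23) (z w24) (z w34).

Lemma tri_id (p : st3) : tri (p j2) (p j3) (p j4) = p.
Proof.
apply/ffunP => -[[|[|[|k]]] Hk]; rewrite /tri ffunE //=; congr (p _); exact: val_inj.
Qed.

Lemma sum6 (f : st d 'I_6 -> K) : \sum_z f z = \sum_p \sum_u f (cat6 p u).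
Proof.
rewrite pair_big /= (reindex (fun pu : st3 * st3 => cat6 pu.1 pu.2)) //=.
exists (fun z => (sp1 z, sp2 z)).
  move=> [p u] _ /=; rewrite /sp1 /sp2 /cat6 !ffunE /=.
  by rewrite !tri_id.
move=> z _; apply/ffunP => -[[|[|[|[|[|[|k]]]]]] Hk]; rewrite /cat6 /sp1 /sp2 !ffunE //=;
  try (congr (z _); exact: val_inj).
Qed.

Definition Nm (G : op K d 'I_6) (p q : st3) : mat K st3 := fun u v => G (cat6 p u) (cat6 q v).

Lemma Nm_mul (G G' : op K d 'I_6) p q :
  Nm (opmul G G') p q = fun u v => \sum_r mmul (Nm G p r) (Nm G' r q) u v.
Proof.
apply: functional_extensionality => u; apply: functional_extensionality => v.
by rewrite /Nm /opmul sum6.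
Qed.
End Six.
Section Embs.
Variable K : comPzRingType.
Variable d : nat.
Local Notation st3 := (st d 'I_3).

Lemma prod3 (F : 'I_3 -> K) : \prod_i F i = F j2 * F j3 * F j4.
Proof.
rewrite !big_ord_recl big_ord0 mulr1 mulrA; congr (F _ * F _ * F _); exact: val_inj.
Qed.

Lemma Nm_emb0 (X : op K d 'I_3) p q :
  Nm (emb X w12 w13 w23) p q =
  mscale (p j4 == q j4)%:R (K3 (fun i => if i == j2 then Amat X p q j2 j3 else @mid K _)).
Proof.
apply: functional_extensionality => u; apply: functional_extensionality => v.
rewrite /Nm /emb /mscale /K3 prod3 /=.
have E : forall r w : st3, sel w12 w13 w23 (cat6 r w) = tri (r j2) (r j3) (w j2).
  by move=> r w; apply/ffunP => -[[|[|[|k]]] Hk]; rewrite !ffunE.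
rewrite !E.
have -> : [forall w : 'I_6, (w != w12) && (w != w13) && (w != w23) ==>
             (cat6 p u w == cat6 q v w)] = [&& p j4 == q j4, u j3 == v j3 & u j4 == v j4].
  apply/forallP/and3P => [H|[H1 H2 H3] w].
    by split; [move: (H w14) | move: (H w24) | move: (H w34)]; rewrite /cat6 !ffunE.
  by case: w => [[|[|[|[|[|[|k]]]]]] Hk]; rewrite /cat6 !ffunE.
rewrite -!mulnb !natrM /mid /Amat.
by rewrite mulrCA !mulrA.
Qed.

Lemma Nm_emb1 (X : op K d 'I_3) p q :
  Nm (emb X w12 w14 w24) p q =
  mscale (p j3 == q j3)%:R (K3 (fun i => if i == j3 then Amat X p q j2 j4 else @mid K _)).
Proof.
apply: functional_extensionality => u; apply: functional_extensionality => v.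
rewrite /Nm /emb /mscale /K3 prod3 /=.
have E : forall r w : st3, sel w12 w14 w24 (cat6 r w) = tri (r j2) (r j4) (w j3).
  by move=> r w; apply/ffunP => -[[|[|[|k]]] Hk]; rewrite !ffunE.
rewrite !E.
have -> : [forall w : 'I_6, (w != w12) && (w != w14) && (w != w24) ==>
             (cat6 p u w == cat6 q v w)] = [&& p j3 == q j3, u j2 == v j2 & u j4 == v j4].
  apply/forallP/and3P => [H|[H1 H2 H3] w].
    by split; [move: (H w13) | move: (H w23) | move: (H w34)]; rewrite /cat6 !ffunE.
  by case: w => [[|[|[|[|[|[|k]]]]]] Hk]; rewrite /cat6 !ffunE.
rewrite -!mulnb !natrM /mid /Amat.
ring.
Qed.

Lemma Nm_emb2 (X : op K d 'I_3) p q :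
  Nm (emb X w13 w14 w34) p q =
  mscale (p j2 == q j2)%:R (K3 (fun i => if i == j4 then Amat X p q j3 j4 else @mid K _)).
Proof.
apply: functional_extensionality => u; apply: functional_extensionality => v.
rewrite /Nm /emb /mscale /K3 prod3 /=.
have E : forall r w : st3, sel w13 w14 w34 (cat6 r w) = tri (r j3) (r j4) (w j4).
  by move=> r w; apply/ffunP => -[[|[|[|k]]] Hk]; rewrite !ffunE.
rewrite !E.
have -> : [forall w : 'I_6, (w != w13) && (w != w14) && (w != w34) ==>
             (cat6 p u w == cat6 q v w)] = [&& p j2 == q j2, u j2 == v j2 & u j3 == v j3].
  apply/forallP/and3P => [H|[H1 H2 H3] w].
    by split; [move: (H w12) | move: (H w23) | move: (H w24)]; rewrite /cat6 !ffunE.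
  by case: w => [[|[|[|[|[|[|k]]]]]] Hk]; rewrite /cat6 !ffunE.
rewrite -!mulnb !natrM /mid /Amat.
ring.
Qed.

Lemma eq_st3 (p q : st3) : (p == q) = [&& p j2 == q j2, p j3 == q j3 & p j4 == q j4].
Proof.
apply/eqP/and3P => [->|[/eqP a /eqP b /eqP c]]; first by rewrite !eqxx.
by rewrite -[p]tri_id -[q]tri_id a b c.
Qed.

Lemma Nm_embT (X : op K d 'I_3) p q :
  Nm (emb X w23 w24 w34) p q = mscale (p == q)%:R X.
Proof.
apply: functional_extensionality => u; apply: functional_extensionality => v.
rewrite /Nm /emb /mscale /=.
have E : forall r w : st3, sel w23 w24 w34 (cat6 r w) = w.
  by move=> r w; rewrite -[RHS]tri_id; apply/ffunP => -[[|[|[|k]]] Hk]; rewrite !ffunE.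
rewrite !E eq_st3.
have -> : [forall w : 'I_6, (w != w23) && (w != w24) && (w != w34) ==>
             (cat6 p u w == cat6 q v w)] = [&& p j2 == q j2, p j3 == q j3 & p j4 == q j4].
  apply/forallP/and3P => [H|[H1 H2 H3] w].
    by split; [move: (H w12) | move: (H w13) | move: (H w14)]; rewrite /cat6 !ffunE.
  by case: w => [[|[|[|[|[|[|k]]]]]] Hk]; rewrite /cat6 !ffunE.
by rewrite mulrC.
Qed.
End Embs.
Section Main.
Variable K : comPzRingType.
Variables d n : nat.
Local Notation st3 := (st d 'I_3).
Local Notation W := (W3 n).

Lemma mmul_sumr (I J : finType) (A : mat K I) (B : J -> mat K I) :
  mmul A (fun u v => \sum_j B j u v) = fun u v => \sum_j mmul A (B j) u v.
Proof.
apply: functional_extensionality => u; apply: functional_extensionality => v.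
rewrite /mmul exchange_big /=; apply: eq_bigr => w _; by rewrite big_distrr.
Qed.

Lemma prod_nat_forall (T : finType) (b : T -> bool) :
  \prod_l ((b l)%:R : K) = ([forall l, b l])%:R.
Proof.
have [H|] := boolP [forall l, b l].
  by rewrite big1 // => l _; move/forallP: H => ->.
case/forallPn => l bl.
by rewrite (bigD1 l) //= (negbTE bl) mul0r.
Qed.

Lemma offab_prod (a b c : 'I_3) (x y : st d W) :
  (forall j : 'I_3, (j != a) && (j != b) = (j == c)) ->
  ((offab (enum 'I_n) a b x y)%:R : K) = \prod_l (slice x l c == slice y l c)%:R.
Proof.
move=> Hc; rewrite prod_nat_forall /offab; congr ((nat_of_bool _)%:R).
have E : forall l : 'I_n, l \in enum 'I_n by move=> l; rewrite mem_enum.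
apply/forallP/forallP => [H l|H [l j]] /=.
  by move: (H (l, c)); rewrite /slice !ffunE E /= Hc eqxx implyTb; apply.
rewrite E /= Hc; apply/implyP => /eqP ->.
by move: (H l); rewrite /slice !ffunE; apply.
Qed.

Definition unc (Z : {ffun 'I_n -> st3 * st3}) : st d W * st d W :=
  ([ffun w : W => (Z w.1).1 w.2], [ffun w : W => (Z w.1).2 w.2]).

Lemma sum_pairs (f : st d W * st d W -> K) :
  \sum_p f p = \sum_(Z : {ffun 'I_n -> st3 * st3}) f (unc Z).
Proof.
rewrite (reindex unc) //=.
exists (fun p => [ffun l => (slice p.1 l, slice p.2 l)]).
  move=> Z _; apply/ffunP => l; rewrite /unc /slice !ffunE /=.
  by rewrite [RHS]surjective_pairing; congr pair; apply/ffunP => j; rewrite !ffunE.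
by move=> [z1 z2] _; rewrite /unc /slice; congr pair; apply/ffunP => -[l j]; rewrite !ffunE.
Qed.

Lemma slice_unc1 Z l : slice (unc Z).1 l = (Z l).1.
Proof. by apply/ffunP => j; rewrite /slice /unc !ffunE. Qed.
Lemma slice_unc2 Z l : slice (unc Z).2 l = (Z l).2.
Proof. by apply/ffunP => j; rewrite /slice /unc !ffunE. Qed.


Lemma slice_unc1' Z : slice (unc Z).1 = fun l => (Z l).1.
Proof. by apply: functional_extensionality => l; apply: slice_unc1. Qed.
Lemma slice_unc2' Z : slice (unc Z).2 = fun l => (Z l).2.
Proof. by apply: functional_extensionality => l; apply: slice_unc2. Qed.

Lemma prod_enum (F : 'I_n -> K) : \prod_(l <- enum 'I_n) F l = \prod_l F l.
Proof. by rewrite big_enum; apply: eq_bigl => l; rewrite inE. Qed.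

Lemma Hc234 (j : 'I_3) : (j != j2) && (j != j3) = (j == j4).
Proof. by case: j => [[|[|[|k]]] Hk]. Qed.
Lemma Hc243 (j : 'I_3) : (j != j2) && (j != j4) = (j == j3).
Proof. by case: j => [[|[|[|k]]] Hk]. Qed.
Lemma Hc342 (j : 'I_3) : (j != j3) && (j != j4) = (j == j2).
Proof. by case: j => [[|[|[|k]]] Hk]. Qed.

Lemma K3simp (A1 A2 A3 : mat K 'I_d) :
  (fun i : 'I_3 => mmul (if i == j2 then A1 else @mid K _)
     (mmul (if i == j3 then A2 else @mid K _) (if i == j4 then A3 else @mid K _)))
  = (fun i => if i == j2 then A1 else if i == j3 then A2 else A3).
Proof.
apply: functional_extensionality => -[[|[|[|k]]] Hk] //=;
  by rewrite ?mmul1l ?mmul1r.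
Qed.

Lemma K3simp' (A1 A2 A3 : mat K 'I_d) :
  (fun i : 'I_3 => mmul (if i == j4 then A3 else @mid K _)
     (mmul (if i == j3 then A2 else @mid K _) (if i == j2 then A1 else @mid K _)))
  = (fun i => if i == j2 then A1 else if i == j3 then A2 else A3).
Proof.
apply: functional_extensionality => -[[|[|[|k]]] Hk] //=;
  by rewrite ?mmul1l ?mmul1r.
Qed.

Lemma opmul3_expand (A B C : op K d W) x y :
  opmul A (opmul B C) x y
  = \sum_(Z : {ffun 'I_n -> st3 * st3}) A x (unc Z).1 * (B (unc Z).1 (unc Z).2 * C (unc Z).2 y).
Proof.
rewrite /opmul; under eq_bigr do rewrite big_distrr /=.
by rewrite pair_bigA /= sum_pairs.
Qed.

Lemma LHSform (F1 F2 F3 : 'I_n -> op K d 'I_3) (x y : st d W) :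
  opmul (tr2 F1 j2 j3) (opmul (tr2 F2 j2 j4) (tr2 F3 j3 j4)) x y =
  mtr (mprod (enum 'I_n) (fun l => Nm (opmul (emb (F1 l) w12 w13 w23)
        (opmul (emb (F2 l) w12 w14 w24) (emb (F3 l) w13 w14 w34))) (slice x l) (slice y l))).
Proof.
rewrite [LHS]opmul3_expand.
pose G l (z : st3 * st3) := mscale ((slice x l j4 == z.1 j4)%:R *
    (z.1 j3 == z.2 j3)%:R * (z.2 j2 == slice y l j2)%:R)
  (K3 (fun i => if i == j2 then Amat (F1 l) (slice x l) z.1 j2 j3 else
       if i == j3 then Amat (F2 l) z.1 z.2 j2 j4 else Amat (F3 l) z.2 (slice y l) j3 j4)).
have -> : (fun l => Nm (opmul (emb (F1 l) w12 w13 w23)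
        (opmul (emb (F2 l) w12 w14 w24) (emb (F3 l) w13 w14 w34))) (slice x l) (slice y l))
   = (fun l u v => \sum_z G l z u v).
  apply: functional_extensionality => l.
  apply: functional_extensionality => u; apply: functional_extensionality => v.
  rewrite Nm_mul; under eq_bigr do rewrite Nm_mul mmul_sumr.
  rewrite pair_bigA; apply: eq_bigr => -[r1 r2] _ /=.
  by rewrite Nm_emb0 Nm_emb1 Nm_emb2 !mmulZl !mmulZr !mscaleA !K3mul K3simp.
rewrite -(mprod_distr G [ffun l => (slice x l, slice x l)]) mtr_sum.
rewrite /G /=; under eq_bigr => Z _ do rewrite mprodZ mtrZ mprodK3 mtrK3 prod3 /=.
apply: eq_bigr => Z _.
rewrite !S1 (offab_prod _ _ Hc234) (offab_prod _ _ Hc243)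
  (offab_prod _ _ Hc342) !slice_unc1' !slice_unc2' /= prod_enum !big_split /=.
ring.
Qed.

Lemma RHSform (F1 F2 F3 : 'I_n -> op K d 'I_3) (x y : st d W) :
  opmul (tr2 F3 j3 j4) (opmul (tr2 F2 j2 j4) (tr2 F1 j2 j3)) x y =
  mtr (mprod (enum 'I_n) (fun l => Nm (opmul (emb (F3 l) w13 w14 w34)
        (opmul (emb (F2 l) w12 w14 w24) (emb (F1 l) w12 w13 w23))) (slice x l) (slice y l))).
Proof.
rewrite [LHS]opmul3_expand.
pose G l (z : st3 * st3) := mscale ((slice x l j2 == z.1 j2)%:R *
    (z.1 j3 == z.2 j3)%:R * (z.2 j4 == slice y l j4)%:R)
  (K3 (fun i => if i == j2 then Amat (F1 l) z.2 (slice y l) j2 j3 else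
       if i == j3 then Amat (F2 l) z.1 z.2 j2 j4 else Amat (F3 l) (slice x l) z.1 j3 j4)).
have -> : (fun l => Nm (opmul (emb (F3 l) w13 w14 w34)
        (opmul (emb (F2 l) w12 w14 w24) (emb (F1 l) w12 w13 w23))) (slice x l) (slice y l))
   = (fun l u v => \sum_z G l z u v).
  apply: functional_extensionality => l.
  apply: functional_extensionality => u; apply: functional_extensionality => v.
  rewrite Nm_mul; under eq_bigr do rewrite Nm_mul mmul_sumr.
  rewrite pair_bigA; apply: eq_bigr => -[r1 r2] _ /=.
  by rewrite Nm_emb0 Nm_emb1 Nm_emb2 !mmulZl !mmulZr !mscaleA !K3mul K3simp'.
rewrite -(mprod_distr G [ffun l => (slice x l, slice x l)]) mtr_sum.
rewrite /G /=; under eq_bigr => Z _ do rewrite mprodZ mtrZ mprodK3 mtrK3 prod3 /=.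
apply: eq_bigr => Z _.
rewrite !S1 (offab_prod _ _ Hc234) (offab_prod _ _ Hc243)
  (offab_prod _ _ Hc342) !slice_unc1' !slice_unc2' /= prod_enum !big_split /=.
ring.
Qed.
End Main.
Section Final.
Variable K : comPzRingType.
Variables (d : nat) (CC : Type).

Lemma Nm_mulT (G : op K d 'I_6) (T : op K d 'I_3) p q :
  Nm (opmul G (emb T w23 w24 w34)) p q = mmul (Nm G p q) T.
Proof.
rewrite Nm_mul; apply: functional_extensionality => u; apply: functional_extensionality => v.
rewrite (bigD1 q) //= [X in _ + X]big1 ?addr0.
  by rewrite Nm_embT eqxx mmulZr /mscale mul1r.
by move=> r rq; rewrite Nm_embT mmulZr /mscale (negbTE rq) mul0r.
Qed.

Lemma Nm_Tmul (G : op K d 'I_6) (T : op K d 'I_3) p q :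
  Nm (opmul (emb T w23 w24 w34) G) p q = mmul T (Nm G p q).
Proof.
rewrite Nm_mul; apply: functional_extensionality => u; apply: functional_extensionality => v.
rewrite (bigD1 p) //= [X in _ + X]big1 ?addr0.
  by rewrite Nm_embT eqxx mmulZl /mscale mul1r.
by move=> r rp; rewrite Nm_embT mmulZl /mscale eq_sym (negbTE rp) mul0r.
Qed.

Lemma mprod_map (I : finType) (T1 T2 : Type) (g : T1 -> T2) (s : seq T1) (F : T2 -> mat K I) :
  mprod (map g s) F = mprod s (fun x => F (g x)).
Proof. by elim: s => //= a s ->. Qed.

Lemma mprod_iota (I : finType) (n : nat) (o0 : 'I_n) (F : 'I_n -> mat K I) :
  mprod (enum 'I_n) F = mprod (iota 0 n) (fun k => F (insubd o0 k)).
Proof.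
rewrite -val_enum_ord mprod_map; apply: eq_mprod => i _.
by rewrite valKd.
Qed.


Lemma mtr_close (I : finType) (P Q T Y : mat K I) :
  mmul P T = mmul T Q -> mmul T Y = @mid K I -> mmul Y T = @mid K I -> mtr P = mtr Q.
Proof.
move=> H HY1 HY2.
by rewrite -[P]mmul1r -HY1 (mmulA P T Y) H -mmulA mtrC -mmulA HY2 mmul1r.
Qed.

Lemma opmulA' (W : finType) (A B C : op K d W) : opmul A (opmul B C) = opmul (opmul A B) C.
Proof. exact: mmulA. Qed.

Lemma trred_tr2 (X : opfamily K d CC) (n : nat) (s : 'I_n -> CC) ra rb a b sg :
  trred X s ra rb a b sg = tr2 (fun l => X (sg + (l.+1)%:R) (s l) ra rb) a b.
Proof. by []. Qed.

Theorem gen (Rm Rd Rdd Rddd : opfamily K d CC) :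
  (forall s : 'Z_2, BTE Rm Rd Rdd Rddd s) ->
  (forall (s : 'Z_2) (r1 r2 r3 : CC), invertible_op (Rddd s r1 r2 r3)) ->
  forall (L : nat), (1 <= L)%N ->
  forall (s1 : 'I_(2 * L) -> CC) (r2 r3 r4 : CC) (sg : 'Z_2),
  opmul (trred Rm s1 r2 r3 j2 j3 sg)
    (opmul (trred Rd s1 r2 r4 j2 j4 (sg + 1))
           (trred Rdd s1 r3 r4 j3 j4 sg))
  =
  opmul (trred Rdd s1 r3 r4 j3 j4 (sg + 1))
    (opmul (trred Rd s1 r2 r4 j2 j4 sg)
           (trred Rm s1 r2 r3 j2 j3 (sg + 1))).
Proof.
move=> HB HI L HL s1 r2 r3 r4 sg.
apply: functional_extensionality => x; apply: functional_extensionality => y.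
rewrite !trred_tr2 [LHS]LHSform [RHS]RHSform.
have HL' : (0 < 2 * L)%N by rewrite muln_gt0.
pose o0 : 'I_(2 * L) := Ordinal HL'.
rewrite !(mprod_iota o0).
have [Y [HY1 HY2]] := HI (sg + 1) r2 r3 r4.
apply: (mtr_close (T := Rddd (sg + 1) r2 r3 r4) (Y := Y)) => //.
pose T k := Rddd (sg + (k.+1)%:R) r2 r3 r4.
have E0 : Rddd (sg + 1) r2 r3 r4 = T 0%N by rewrite /T mulr1n.
have En : Rddd (sg + 1) r2 r3 r4 = T (0 + 2 * L)%N.
  rewrite /T add0n -natr1 natrM.
  have -> : (2%:R : 'Z_2) = 0 by apply/eqP.
  by rewrite mul0r add0r.
rewrite {1}En E0; apply: mtele => i /andP [_ Hi].
set l := insubd o0 i.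
have Hi' : (i < 2 * L)%N by move: Hi; rewrite ?add0n.
have El : val l = i by rewrite /l val_insubd Hi'.
have Ec : sg + 1 + (l.+1)%:R = (sg + (l.+1)%:R) + 1 by rewrite addrAC.
have ET1 : T i.+1 = Rddd ((sg + (l.+1)%:R) + 1) r2 r3 r4 by rewrite /T El -natr1 addrA.
have ET0 : T i = Rddd (sg + (l.+1)%:R) r2 r3 r4 by rewrite /T El.
rewrite ET1 ET0 -Nm_mulT -Nm_Tmul Ec -!opmulA'.
by rewrite (HB (sg + (l.+1)%:R) (s1 l) r2 r3 r4).
Qed.
End Final.

Import ComplexField.
Local Open Scope complex_scope.

Theorem mainTheorem1 (R : realType) (d : nat) (C : Type)
  (Rm Rd Rdd Rddd : opfamily (complex R) d C) :
  (forall s : 'Z_2, BTE Rm Rd Rdd Rddd s) ->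
  (forall (s : 'Z_2) (r1 r2 r3 : C), invertible_op (Rddd s r1 r2 r3)) ->
  forall (L : nat), (1 <= L)%N ->
  forall (s1 : 'I_(2 * L) -> C) (r2 r3 r4 : C) (sg : 'Z_2),
  opmul (trred Rm s1 r2 r3 j2 j3 sg)
    (opmul (trred Rd s1 r2 r4 j2 j4 (sg + 1))
           (trred Rdd s1 r3 r4 j3 j4 sg))
  =
  opmul (trred Rdd s1 r3 r4 j3 j4 (sg + 1))
    (opmul (trred Rd s1 r2 r4 j2 j4 sg)
           (trred Rm s1 r2 r3 j2 j3 (sg + 1))).
Proof.
exact: (@gen (complex R) d C Rm Rd Rdd Rddd).
Qed.
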